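(* Let $\mathcal{N}_{A'B'\to AB}$ be a bipartite replacer channel, $\mathcal{N}(\rho_{A'B'})=\operatorname{Tr}[\rho_{A'B'}]\,\omega_{AB}$ for a fixed state $\omega_{AB}$. Then $$E_N(\mathcal{N})=E_N(\omega_{AB}),\qquad \mathbf{R}(\mathcal{N})=\mathbf{R}(\omega_{AB}).$$
   Context: $T_X$ is the partial transpose on $X$. For a state, $E_N(\omega_{AB})=\log\|T_B(\omega_{AB})\|_1$. For a bipartite map (Alice: $A',A$; Bob: $B',B$), $E_N(\mathcal{M})=\log\|T_B\circ\mathcal{M}\circ T_{B'}\|_\diamond$ with $\|\mathcal{P}\|_\diamond=\sup_\psi\|(\mathrm{id}_{S_AS_B}\otimes\mathcal{P})(\psi_{S_AA'B'S_B})\|_1$ over pure states. $\mathbf{D}$ is a generalized divergence: a function $\mathbf{D}(\rho\|\sigma)$ ($\rho$ a state, $\sigma\ge0$) obeying $\mathbf{D}(\rho\|\sigma)\ge\mathbf{D}(\mathcal{E}(\rho)\|\mathcal{E}(\sigma))$ for all channels $\mathcal{E}$. Generalized channel divergence: $\mathbf{D}(\mathcal{N}\|\mathcal{M})=\sup_{\psi}\mathbf{D}((\mathrm{id}\otimes\mathcal{N})(\psi_{S_AA'B'S_B})\|(\mathrm{id}\otimes\mathcal{M})(\psi_{S_AA'B'S_B}))$ over pure states with $S_A\simeq A'$, $S_B\simeq B'$. Generalized Rains information of a bipartite channel: $\mathbf{R}(\mathcal{N})=\inf_{\mathcal{M}:E_N(\mathcal{M})\le0}\mathbf{D}(\mathcal{N}\|\mathcal{M})$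 over completely positive bipartite maps $\mathcal{M}_{A'B'\to AB}$. Generalized Rains relative entropy of a state: $\mathbf{R}(\omega_{AB})=\inf\{\mathbf{D}(\omega_{AB}\|\sigma_{AB}):\sigma_{AB}\ge0,\ E_N(\sigma_{AB})\le0\}$. *)

(* Defs.v *)
From Stdlib Require Import Reals Lra ClassicalEpsilon.
Open Scope R_scope.

Definition C := (R * R)%type.
Definition Cre (z : C) : R := fst z.
Definition Cim (z : C) : R := snd z.
Definition C0 : C := (0, 0).
Definition C1 : C := (1, 0).
Definition Cadd (z w : C) : C := (fst z + fst w, snd z + snd w).
Definition Cmul (z w : C) : C :=
  (fst z * fst w - snd z * snd w, fst z * snd w + snd z * fst w).
Definition Cconj (z : C) : C := (fst z, - snd z).

Fixpoint csum (n : nat) (f : nat -> C) : C :=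
  match n with O => C0 | S k => Cadd (csum k f) (f k) end.

(** * Matrices: an n x n matrix is given by its entries with indices < n;
    entries outside the range are ignored (compare with [meq]). *)
Definition Mat := nat -> nat -> C.
Definition Vec := nat -> C.

Definition meq (n : nat) (X Y : Mat) : Prop :=
  forall i j, (i < n)%nat -> (j < n)%nat -> X i j = Y i j.
Definition madd (X Y : Mat) : Mat := fun i j => Cadd (X i j) (Y i j).
Definition mscale (c : C) (X : Mat) : Mat := fun i j => Cmul c (X i j).
Definition mmul (n : nat) (X Y : Mat) : Mat :=
  fun i j => csum n (fun k => Cmul (X i k) (Y k j)).
Definition madj (X : Mat) : Mat := fun i j => Cconj (X j i).
Definition mtrace (n : nat) (X : Mat) : C := csum n (fun i => X i i).

Definition quad (n : nat) (X : Mat) (v : Vec) : C :=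
  csum n (fun i => csum n (fun j => Cmul (Cconj (v i)) (Cmul (X i j) (v j)))).

Definition psd (n : nat) (X : Mat) : Prop :=
  (forall i j, (i < n)%nat -> (j < n)%nat -> X i j = Cconj (X j i)) /\
  (forall v : Vec, 0 <= Cre (quad n X v)).

Definition state (n : nat) (X : Mat) : Prop := psd n X /\ mtrace n X = C1.

Definition unit_vec (n : nat) (v : Vec) : Prop :=
  Cre (csum n (fun i => Cmul (Cconj (v i)) (v i))) = 1.
Definition proj (v : Vec) : Mat := fun i j => Cmul (v i) (Cconj (v j)).

(** * Tensor products.  The index of |i> (x) |j> in C^a (x) C^b is i*b+j. *)

(** partial transpose on the second factor of C^a (x) C^b:
    (T_B X)[(i,j),(k,l)] = X[(i,l),(k,j)] *)
Definition ptB (a b : nat) (X : Mat) : Mat :=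
  fun p q => X ((p / b) * b + q mod b)%nat ((q / b) * b + p mod b)%nat.

(** (id_k (x) E)(X) for a linear map E from n x n to m x m matrices *)
Definition idtensor (k n m : nat) (E : Mat -> Mat) (X : Mat) : Mat :=
  fun p q => E (fun a b => X ((p / m) * n + a)%nat ((q / m) * n + b)%nat)
               (p mod m) (q mod m).

Definition lin_map (n m : nat) (E : Mat -> Mat) : Prop :=
  (forall X Y, meq n X Y -> meq m (E X) (E Y)) /\
  (forall X Y, meq m (E (madd X Y)) (madd (E X) (E Y))) /\
  (forall c X, meq m (E (mscale c X)) (mscale c (E X))).

Definition CP (n m : nat) (E : Mat -> Mat) : Prop :=
  lin_map n m E /\
  forall (k : nat) (X : Mat), psd (k * n)%nat X -> psd (k * m)%nat (idtensor k n m E X).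

Definition TP (n m : nat) (E : Mat -> Mat) : Prop :=
  forall X, mtrace m (E X) = mtrace n X.

Definition channel (n m : nat) (E : Mat -> Mat) : Prop := CP n m E /\ TP n m E.

Definition trace_norm (n : nat) (X : Mat) : R :=
  epsilon (inhabits 0) (fun t => exists Y, psd n Y /\
     meq n (mmul n Y Y) (mmul n (madj X) X) /\ t = Cre (mtrace n Y)).

Inductive Rbar := Fin (r : R) | PInf | MInf.
Definition Rbar_le (x y : Rbar) : Prop :=
  match x, y with
  | MInf, _ => True
  | _, PInf => True
  | Fin a, Fin b => a <= b
  | _, _ => False
  end.
Definition is_sup (S : Rbar -> Prop) (s : Rbar) : Prop :=
  (forall x, S x -> Rbar_le x s) /\
  (forall u, (forall x, S x -> Rbar_le x u) -> Rbar_le s u).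
Definition is_inf (S : Rbar -> Prop) (s : Rbar) : Prop :=
  (forall x, S x -> Rbar_le s x) /\
  (forall u, (forall x, S x -> Rbar_le u x) -> Rbar_le u s).
Definition Rbar_sup (S : Rbar -> Prop) : Rbar := epsilon (inhabits MInf) (is_sup S).
Definition Rbar_inf (S : Rbar -> Prop) : Rbar := epsilon (inhabits MInf) (is_inf S).
Definition Rbar_ln (x : Rbar) : Rbar :=
  match x with
  | Fin r => if Rlt_dec 0 r then Fin (ln r) else MInf
  | PInf => PInf
  | MInf => MInf
  end.

(** * Diamond norm of a map P from n x n to m x m matrices:
    sup over pure states on S (x) (input), S = S_A S_B of arbitrary dimension. *)
Definition diamond (n m : nat) (P : Mat -> Mat) : Rbar :=
  Rbar_sup (fun x => exists (sA sB : nat) (v : Vec),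
     (0 < sA)%nat /\ (0 < sB)%nat /\ unit_vec ((sA * sB) * n)%nat v /\
     x = Fin (trace_norm ((sA * sB) * m)%nat (idtensor (sA * sB)%nat n m P (proj v)))).

Definition EN_map (dA' dB' dA dB : nat) (M : Mat -> Mat) : Rbar :=
  Rbar_ln (diamond (dA' * dB')%nat (dA * dB)%nat (fun X => ptB dA dB (M (ptB dA' dB' X)))).
Definition EN_state (dA dB : nat) (w : Mat) : Rbar :=
  Rbar_ln (Fin (trace_norm (dA * dB)%nat (ptB dA dB w))).

(** * Generalized divergences: D n rho sigma, for n x n matrices *)
Definition Div := nat -> Mat -> Mat -> Rbar.
Definition gen_div (D : Div) : Prop :=
  forall (n m : nat) (E : Mat -> Mat) (rho sigma : Mat),
    channel n m E -> state n rho -> psd n sigma ->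
    Rbar_le (D m (E rho) (E sigma)) (D n rho sigma).

(** generalized channel divergence, reference S = S_A S_B with S_A ~ A', S_B ~ B'
    (so dim S = n = dim A'B') *)
Definition chan_div (D : Div) (n m : nat) (N M : Mat -> Mat) : Rbar :=
  Rbar_sup (fun x => exists v : Vec, unit_vec (n * n)%nat v /\
     x = D (n * m)%nat (idtensor n n m N (proj v)) (idtensor n n m M (proj v))).

Definition rains_map (D : Div) (dA' dB' dA dB : nat) (N : Mat -> Mat) : Rbar :=
  Rbar_inf (fun x => exists M : Mat -> Mat,
     CP (dA' * dB')%nat (dA * dB)%nat M /\ Rbar_le (EN_map dA' dB' dA dB M) (Fin 0) /\
     x = chan_div D (dA' * dB')%nat (dA * dB)%nat N M).

Definition rains_state (D : Div) (dA dB : nat) (w : Mat) : Rbar :=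
  Rbar_inf (fun x => exists sigma : Mat,
     psd (dA * dB)%nat sigma /\ Rbar_le (EN_state dA dB sigma) (Fin 0) /\
     x = D (dA * dB)%nat w sigma).

Definition replacer (n : nat) (w : Mat) : Mat -> Mat :=
  fun X => mscale (mtrace n X) w.

(* Main.v *)
Require Import Defs.
From Stdlib Require Import Reals.
From Stdlib Require Import Lra Lia ClassicalEpsilon FunctionalExtensionality PropExtensionality Arith.
From mathcomp Require all_boot all_algebra Rstruct complex spectral sesquilinear ring.

Module Bt.
Import all_boot all_algebra Rstruct complex spectral sesquilinear ring.
Import GRing.Theory Num.Theory.
Local Open Scope ring_scope.
Local Open Scope sesquilinear_scope.

Local Notation CC := (complex Rdefinitions.R).
Definition toC (z : Defs.C) : CC := Complex (fst z) (snd z).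
Definition ofC (z : CC) : Defs.C := (complex.Re z, complex.Im z).
Lemma toCK z : ofC (toC z) = z. Proof. by case: z. Qed.
Lemma ofCK z : toC (ofC z) = z. Proof. by case: z. Qed.
Lemma toC_inj a b : toC a = toC b -> a = b.
Proof. by move=> h; rewrite -(toCK a) h toCK. Qed.
Lemma toC_add a b : toC (Cadd a b) = toC a + toC b. Proof. by case: a; case: b. Qed.
Lemma toC_mul a b : toC (Cmul a b) = toC a * toC b. Proof. by case: a; case: b. Qed.
Lemma toC0 : toC C0 = 0. Proof. by []. Qed.

Lemma conjCc (z : CC) : z^* = conjc z.
Proof.
rewrite {1}[z]Crect conjC_rect ?Creal_Re ?Creal_Im //.
rewrite -complexRe -complexIm; case: z => a b /=.
by rewrite -complexiE; simpc.
Qed.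
Lemma toC_conj a : toC (Cconj a) = (toC a)^*.
Proof. by rewrite conjCc; case: a. Qed.

Lemma toC_csum n f : toC (csum n f) = \sum_(i < n) toC (f i).
Proof.
elim: n => [|n IH]; first by rewrite big_ord0.
by rewrite big_ord_recr /= toC_add IH.
Qed.

Lemma toC_quad n A v : toC (quad n A v) =
  \sum_(i < n) \sum_(j < n) (toC (v i))^* * (toC (A i j) * toC (v j)).
Proof.
rewrite /quad toC_csum; apply: eq_bigr => i _; rewrite toC_csum.
by apply: eq_bigr => j _; rewrite toC_mul toC_mul toC_conj.
Qed.

Lemma bridge_sqrt (n : nat) (A : Mat) : psd n A ->
  (forall v, Cim (quad n A v) = 0%R) ->
  exists Y, psd n Y /\ meq n (mmul n Y Y) A.
Proof.
move=> [hH hP] hIm.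
case: n A hH hP hIm => [|n'] A hH hP hIm.
  exists A; split; [split|].
  - by move=> i j /ltP.
  - by move=> v; rewrite /quad /=; apply: Rle_refl.
  - by move=> i j /ltP.
set n := n'.+1 in A hH hP hIm *.
pose AM : 'M[CC]_n := \matrix_(i, j) toC (A i j).
have AMh : AM ^t* = AM.
  apply/matrixP => i j; rewrite !mxE -toC_conj; congr toC.
  by rewrite -hH //; apply/ltP.
have AMn : AM \is normalmx by apply/normalmxP; rewrite AMh.
pose P := spectralmx AM; pose d := spectral_diag AM.
have hA : AM = invmx P *m diag_mx d *m P by apply/orthomx_spectralP.
have Pu : P \is unitarymx by apply: spectral_unitarymx.
have PPt : P *m P ^t* = 1%:M by apply/unitarymxP.
have iP : invmx P = P ^t* by apply: invmx_unitary.
have PtP : P ^t* *m P = 1%:M by rewrite -iP mulVmx // spectral_unit.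
have hD : P *m AM *m P ^t* = diag_mx d.
  by rewrite hA iP !mulmxA PPt mul1mx -mulmxA PPt mulmx1.
have hd : forall i : 'I_n, d 0 i = toC (quad n A
    (fun k => if (k < n)%N then ofC ((P i (inord k))^*) else C0)).
  move=> i; have := congr1 (fun M : 'M_n => M i i) hD.
  rewrite /= !mxE eqxx mulr1n => <-.
  rewrite toC_quad exchange_big /=; apply: eq_bigr => k _.
  rewrite !mxE big_distrl /=; apply: eq_bigr => j _.
  rewrite !ltn_ord !ofCK !inord_val conjCK !mxE.
  by rewrite mulrA.
have hdr : forall i : 'I_n, d 0 i = (complex.Re (d 0 i))%:C%C.
  move=> i; rewrite hd; set q := quad _ _ _.
  have : Cim q = 0%R := hIm _.
  by case: q => a b /= ->.
have hdp : forall i : 'I_n, (0 <= complex.Re (d 0 i))%R.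
  move=> i; rewrite hd /toC /=; apply/RleP; exact: hP.
pose s : 'rV[CC]_n := \row_i (Num.sqrt (complex.Re (d 0 i)))%:C%C.
pose SM := P ^t* *m diag_mx s *m P.
have hss : diag_mx s *m diag_mx s = diag_mx d.
  rewrite mulmx_diag; congr diag_mx; apply/rowP => i; rewrite !mxE.
  rewrite -rmorphM /= -expr2 sqr_sqrtr ?hdp //.
have hSS : SM *m SM = AM.
  rewrite /SM hA iP !mulmxA -[P ^t* *m _ *m P *m P ^t*]mulmxA PPt mulmx1.
  by rewrite -!mulmxA [diag_mx s *m (_ *m P)]mulmxA hss.
have hSe : forall j k : 'I_n, SM j k = \sum_(l < n) (P l j)^* * (s 0 l * P l k).
  move=> j k; rewrite /SM mxE; apply: eq_bigr => l _.
  by rewrite mul_mx_diag !mxE mulrA.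
have sreal : forall l : 'I_n, (s 0 l)^* = s 0 l.
  by move=> l; rewrite conjCc !mxE conjc_real.
pose Y : Mat := fun j k => if (j < n)%N && (k < n)%N
                          then ofC (SM (inord j) (inord k)) else C0.
have hY : forall j k : 'I_n, toC (Y j k) = SM j k.
  by move=> j k; rewrite /Y !ltn_ord /= ofCK !inord_val.
exists Y; split; [split|].
- move=> j k /ltP hj /ltP hk; apply: toC_inj.
  rewrite toC_conj -[j]/(nat_of_ord (Ordinal hj)) -[k]/(nat_of_ord (Ordinal hk)) !hY.
  rewrite !hSe rmorph_sum /=; apply: eq_bigr => l _.
  rewrite !rmorphM /= conjCK sreal [LHS]mulrCA [RHS]mulrCA; congr (_ * _); exact: mulrC.
- move=> u; have : (0 <= toC (quad n Y u)).
    rewrite toC_quad.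
    have -> : \sum_(i < n) \sum_(j < n) (toC (u i))^* * (toC (Y i j) * toC (u j))
      = \sum_(l < n) s 0 l * ((\sum_(k < n) P l k * toC (u k))^*
                               * (\sum_(k < n) P l k * toC (u k))).
      transitivity (\sum_(i < n) \sum_(j < n) \sum_(l < n)
          s 0 l * (((P l i)^* * (toC (u i))^*) * (P l j * toC (u j)))).
        apply: eq_bigr => i _; apply: eq_bigr => j _.
        rewrite hY hSe big_distrl big_distrr /=; apply: eq_bigr => l _.
        ring.
      under eq_bigr => i _ do rewrite exchange_big /=.
      rewrite exchange_big /=; apply: eq_bigr => l _.
      rewrite rmorph_sum big_distrl big_distrr /=; apply: eq_bigr => i _.
      rewrite big_distrr big_distrr /=; apply: eq_bigr => j _.
      rewrite rmorphM /=; ring.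
    apply: sumr_ge0 => l _; apply: mulr_ge0.
      by rewrite !mxE ler0c sqrtr_ge0.
    by rewrite mulrC mul_conjC_ge0.
  rewrite lecE => /andP [_]; rewrite /toC /= => h; exact/RleP.
- move=> j k /ltP hj /ltP hk; apply: toC_inj.
  rewrite /mmul toC_csum -[j]/(nat_of_ord (Ordinal hj)) -[k]/(nat_of_ord (Ordinal hk)).
  have -> : toC (A (Ordinal hj) (Ordinal hk)) = AM (Ordinal hj) (Ordinal hk) by rewrite mxE.
  rewrite -hSS mxE; apply: eq_bigr => l _; by rewrite toC_mul !hY.
Qed.

End Bt.

Require Import Defs.
Open Scope R_scope.

Definition Copp (z : C) : C := (- fst z, - snd z).
Definition Csub (a b : C) : C := Cadd a (Copp b).

Ltac cdestr := repeat match goal with z : C |- _ => destruct z end.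

Lemma Cring : ring_theory C0 C1 Cadd Cmul Csub Copp (@eq C).
Proof.
  constructor; intros; cdestr; unfold Csub, Cadd, Cmul, Copp, C0, C1; simpl;
  f_equal; ring.
Qed.
Add Ring Cr : Cring.

Lemma Cconj_add a b : Cconj (Cadd a b) = Cadd (Cconj a) (Cconj b).
Proof. cdestr; unfold Cconj, Cadd; simpl; f_equal; ring. Qed.
Lemma Cconj_mul a b : Cconj (Cmul a b) = Cmul (Cconj a) (Cconj b).
Proof. cdestr; unfold Cconj, Cmul; simpl; f_equal; ring. Qed.
Lemma Cconj_invol a : Cconj (Cconj a) = a.
Proof. cdestr; unfold Cconj; simpl; f_equal; ring. Qed.
Lemma Cconj_C0 : Cconj C0 = C0.
Proof. unfold Cconj, C0; simpl; f_equal; ring. Qed.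
Lemma Cconj_C1 : Cconj C1 = C1.
Proof. unfold Cconj, C1; simpl; f_equal; ring. Qed.
Lemma Cconj_opp a : Cconj (Copp a) = Copp (Cconj a).
Proof. cdestr; unfold Cconj, Copp; simpl; f_equal; ring. Qed.

Lemma Cre_add a b : Cre (Cadd a b) = Cre a + Cre b. Proof. reflexivity. Qed.
Lemma Cim_add a b : Cim (Cadd a b) = Cim a + Cim b. Proof. reflexivity. Qed.

Lemma Cnorm_re z : Cre (Cmul (Cconj z) z) = fst z * fst z + snd z * snd z.
Proof. cdestr; unfold Cre, Cmul, Cconj; simpl; ring. Qed.
Lemma Cnorm_im z : Cim (Cmul (Cconj z) z) = 0.
Proof. cdestr; unfold Cim, Cmul, Cconj; simpl; ring. Qed.
Lemma Cnorm_nonneg z : 0 <= Cre (Cmul (Cconj z) z).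
Proof. rewrite Cnorm_re; nra. Qed.
Lemma Cnorm_zero z : Cre (Cmul (Cconj z) z) = 0 -> z = C0.
Proof. rewrite Cnorm_re; intros; destruct z; unfold C0; simpl in *; f_equal; nra. Qed.

Lemma Ceq (a b : C) : fst a = fst b -> snd a = snd b -> a = b.
Proof. destruct a, b; simpl; intros; subst; reflexivity. Qed.

Lemma csum_ext n f g : (forall i, (i < n)%nat -> f i = g i) -> csum n f = csum n g.
Proof. induction n; intros H; simpl; auto. rewrite IHn by (intros; apply H; lia). rewrite H by lia; auto. Qed.

Lemma csum_add n f g : csum n (fun i => Cadd (f i) (g i)) = Cadd (csum n f) (csum n g).
Proof. induction n; simpl. unfold C0, Cadd; simpl; f_equal; ring. rewrite IHn; ring. Qed.

Lemma csum_mul_l n c f : csum n (fun i => Cmul c (f i)) = Cmul c (csum n f).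
Proof. induction n; simpl. unfold C0, Cmul; simpl; f_equal; ring. rewrite IHn; ring. Qed.

Lemma csum_mul_r n c f : csum n (fun i => Cmul (f i) c) = Cmul (csum n f) c.
Proof. induction n; simpl. unfold C0, Cmul; simpl; f_equal; ring. rewrite IHn; ring. Qed.

Lemma csum_opp n f : csum n (fun i => Copp (f i)) = Copp (csum n f).
Proof. induction n; simpl. unfold C0, Copp; simpl; f_equal; ring. rewrite IHn; ring. Qed.

Lemma csum_zero n f : (forall i, (i < n)%nat -> f i = C0) -> csum n f = C0.
Proof. induction n; intros H; simpl; auto. rewrite IHn by (intros; apply H; lia). rewrite H by lia; ring. Qed.

Lemma csum_conj n f : Cconj (csum n f) = csum n (fun i => Cconj (f i)).
Proof. induction n; simpl. apply Cconj_C0. rewrite Cconj_add, IHn; auto. Qed.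

Lemma csum_swap n m (f : nat -> nat -> C) :
  csum n (fun i => csum m (fun j => f i j)) = csum m (fun j => csum n (fun i => f i j)).
Proof.
  induction n; simpl.
  - symmetry; apply csum_zero; auto.
  - rewrite IHn, <- csum_add; auto.
Qed.

Lemma csum_plus a b f : csum (a + b) f = Cadd (csum a f) (csum b (fun j => f (a + j)%nat)).
Proof.
  induction b; simpl.
  - rewrite Nat.add_0_r; ring.
  - rewrite Nat.add_succ_r; simpl; rewrite IHb; ring.
Qed.

Lemma csum_prod a b f :
  csum (a * b) f = csum a (fun i => csum b (fun j => f (i * b + j)%nat)).
Proof.
  induction a; simpl; auto.
  rewrite Nat.add_comm, csum_plus, IHa; auto.
Qed.

Lemma csum_single n j f : (j < n)%nat -> (forall i, (i < n)%nat -> i <> j -> f i = C0) ->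
  csum n f = f j.
Proof.
  induction n; intros Hj H; [lia|]; simpl.
  destruct (Nat.eq_dec j n).
  - subst. rewrite csum_zero by (intros; apply H; lia). ring.
  - rewrite IHn by (auto; lia). rewrite (H n) by lia. ring.
Qed.

Lemma csum_re_nonneg n f : (forall i, (i < n)%nat -> 0 <= Cre (f i)) -> 0 <= Cre (csum n f).
Proof.
  induction n; intros H; cbn [csum]. unfold Cre, C0; simpl; lra.
  rewrite Cre_add. assert (0 <= Cre (f n)) by (apply H; lia).
  assert (0 <= Cre (csum n f)) by (apply IHn; intros; apply H; lia). lra.
Qed.

Lemma csum_re_zero n f : (forall i, (i < n)%nat -> 0 <= Cre (f i)) -> Cre (csum n f) = 0 ->
  forall i, (i < n)%nat -> Cre (f i) = 0.
Proof.
  induction n; intros H Hs i Hi; [lia|]. cbn [csum] in Hs. rewrite Cre_add in Hs.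
  assert (0 <= Cre (f n)) by (apply H; lia).
  assert (0 <= Cre (csum n f)) by (apply csum_re_nonneg; intros; apply H; lia).
  destruct (Nat.eq_dec i n). subst; lra.
  apply IHn; [intros; apply H; lia | lra | lia].
Qed.


Definition herm (n : nat) (X : Mat) : Prop :=
  forall i j, (i < n)%nat -> (j < n)%nat -> X i j = Cconj (X j i).
Definition bil (n : nat) (X : Mat) (u w : Vec) : C :=
  csum n (fun i => csum n (fun j => Cmul (Cconj (u i)) (Cmul (X i j) (w j)))).
Definition mv (n : nat) (X : Mat) (v : Vec) : Vec :=
  fun i => csum n (fun j => Cmul (X i j) (v j)).

Lemma psd_herm n X : psd n X -> herm n X. Proof. intros [H _]; exact H. Qed.

Lemma quad_meq n X Y v : meq n X Y -> quad n X v = quad n Y v.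
Proof.
  intros H; unfold quad; apply csum_ext; intros i Hi; apply csum_ext; intros j Hj.
  rewrite H; auto.
Qed.

Lemma psd_meq n X Y : psd n X -> meq n X Y -> psd n Y.
Proof.
  intros [H1 H2] H; split.
  - intros i j Hi Hj; rewrite <- !H by auto; auto.
  - intros v; rewrite <- (quad_meq n X Y v H); auto.
Qed.

Lemma bil_conj n X u w : herm n X -> Cconj (bil n X u w) = bil n X w u.
Proof.
  intros H; unfold bil. rewrite csum_conj.
  rewrite (csum_ext n _ (fun i => csum n (fun j => Cmul (Cconj (w j)) (Cmul (X j i) (u i))))).
  - apply csum_swap.
  - intros i Hi; rewrite csum_conj; apply csum_ext; intros j Hj.
    rewrite !Cconj_mul, Cconj_invol, (H j i) by auto. ring.
Qed.

Lemma quad_real n X v : herm n X -> Cim (quad n X v) = 0.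
Proof.
  intros H. pose proof (bil_conj n X v v H) as E. unfold quad.
  change (csum n (fun i => csum n (fun j => Cmul (Cconj (v i)) (Cmul (X i j) (v j)))))
    with (bil n X v v).
  destruct (bil n X v v) as [a b]; unfold Cconj in E; simpl in E.
  injection E; intros; unfold Cim; simpl; lra.
Qed.

Lemma csum_lin4 n a b c d (s1 s2 : C) :
  csum n (fun j => Cadd (a j) (Cadd (Cmul s1 (Cadd (b j) (c j))) (Cmul s2 (d j)))) =
  Cadd (csum n a) (Cadd (Cmul s1 (Cadd (csum n b) (csum n c))) (Cmul s2 (csum n d))).
Proof. induction n; simpl. unfold C0, Cadd, Cmul; simpl; f_equal; ring. rewrite IHn; ring. Qed.

Lemma quad_expand n X x y t :
  quad n X (fun i => Cadd (x i) (Cmul (t, 0) (y i))) =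
  Cadd (quad n X x) (Cadd (Cmul (t, 0) (Cadd (bil n X x y) (bil n X y x)))
     (Cmul (t * t, 0) (quad n X y))).
Proof.
  unfold quad, bil. rewrite <- csum_lin4. apply csum_ext; intros i Hi.
  rewrite <- csum_lin4. apply csum_ext; intros j Hj.
    rewrite Cconj_add, Cconj_mul.
    replace (Cconj (t, 0)) with ((t, 0) : C) by (unfold Cconj; simpl; f_equal; ring).
    replace ((t * t, 0) : C) with (Cmul (t, 0) (t, 0)) by (unfold Cmul; simpl; f_equal; ring).
    ring.
Qed.
Lemma Cre_expr a b c d t s :
  Cre (Cadd a (Cadd (Cmul (t, 0) (Cadd b c)) (Cmul (s, 0) d))) =
  Cre a + t * (Cre b + Cre c) + s * Cre d.
Proof. cdestr; unfold Cre, Cadd, Cmul; simpl; ring. Qed.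

Lemma psd_quad0 n X x : psd n X -> Cre (quad n X x) = 0 ->
  forall i, (i < n)%nat -> mv n X x i = C0.
Proof.
  intros [Hh Hp] H0.
  set (y := mv n X x).
  assert (Hb : bil n X y x = csum n (fun i => Cmul (Cconj (y i)) (y i))).
  { unfold bil; apply csum_ext; intros i Hi. rewrite csum_mul_l. reflexivity. }
  assert (Hre : Cre (bil n X x y) = Cre (bil n X y x)).
  { rewrite <- (bil_conj n X x y Hh). destruct (bil n X x y); reflexivity. }
  set (N := Cre (bil n X y x)).
  assert (HN : 0 <= N).
  { unfold N; rewrite Hb; apply csum_re_nonneg; intros; apply Cnorm_nonneg. }
  set (c := Cre (quad n X y)).
  assert (Hc : 0 <= c) by apply Hp.
  assert (Ht : forall t, 0 <= 2 * t * N + t * t * c).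
  { intros t. pose proof (Hp (fun i => Cadd (x i) (Cmul (t, 0) (y i)))) as Q.
    rewrite quad_expand, Cre_expr in Q. unfold c, N. rewrite Hre in Q. nra. }
  assert (N = 0).
  { destruct (Req_dec N 0); auto.
    pose proof (Ht (- N / (c + 1))) as T.
    assert (Hc1 : c + 1 > 0) by lra.
    assert (Heq : 2 * (- N / (c + 1)) * N + (- N / (c + 1)) * (- N / (c + 1)) * c
            = - (N * N * (c + 2) / ((c + 1) * (c + 1)))) by (field; lra).
    rewrite Heq in T.
    assert (N * N * (c + 2) / ((c + 1) * (c + 1)) > 0).
    { apply Rdiv_lt_0_compat; [|nra]. assert (N > 0) by lra. nra. }
    lra. }
  intros i Hi. apply Cnorm_zero.
  apply (csum_re_zero n (fun i => Cmul (Cconj (y i)) (y i))); auto.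
  - intros; apply Cnorm_nonneg.
  - rewrite <- Hb; auto.
Qed.


Lemma mmul_assoc n A B C0' i j :
  mmul n (mmul n A B) C0' i j = mmul n A (mmul n B C0') i j.
Proof.
  unfold mmul.
  transitivity (csum n (fun k => csum n (fun l => Cmul (A i l) (Cmul (B l k) (C0' k j))))).
  - apply csum_ext; intros k Hk. rewrite <- csum_mul_r. apply csum_ext; intros; ring.
  - rewrite csum_swap. apply csum_ext; intros l Hl. rewrite csum_mul_l. reflexivity.
Qed.

Lemma mmul_meq n A A' B B' : meq n A A' -> meq n B B' ->
  meq n (mmul n A B) (mmul n A' B').
Proof.
  intros H1 H2 i j Hi Hj; unfold mmul; apply csum_ext; intros k Hk.
  rewrite H1, H2 by auto; reflexivity.
Qed.

Lemma mmul_sub_r n A B C0' i j :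
  mmul n A (fun i j => Csub (B i j) (C0' i j)) i j = Csub (mmul n A B i j) (mmul n A C0' i j).
Proof.
  unfold mmul, Csub. rewrite <- csum_opp, <- csum_add. apply csum_ext; intros; ring.
Qed.

Lemma mmul_sub_l n A B C0' i j :
  mmul n (fun i j => Csub (A i j) (B i j)) C0' i j = Csub (mmul n A C0' i j) (mmul n B C0' i j).
Proof.
  unfold mmul, Csub. rewrite <- csum_opp, <- csum_add. apply csum_ext; intros; ring.
Qed.

Lemma psd_sqrt_unique n Y1 Y2 : psd n Y1 -> psd n Y2 ->
  meq n (mmul n Y1 Y1) (mmul n Y2 Y2) -> meq n Y1 Y2.
Proof.
  intros P1 P2 HE.
  set (D := fun i j => Csub (Y1 i j) (Y2 i j)).
  assert (HD : herm n D).
  { intros i j Hi Hj; unfold D, Csub.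
    rewrite (psd_herm n Y1 P1 i j), (psd_herm n Y2 P2 i j) by auto.
    rewrite Cconj_add, Cconj_opp; reflexivity. }
  assert (E0 : forall i k, (i < n)%nat -> (k < n)%nat ->
             Cadd (mmul n Y1 D i k) (mmul n D Y2 i k) = C0).
  { intros i k Hi Hk. unfold D. rewrite mmul_sub_r, mmul_sub_l.
    rewrite (HE i k Hi Hk). unfold Csub. ring. }
  set (col := fun k : nat => fun i : nat => D i k).
  assert (Q1 : forall k, (k < n)%nat ->
     quad n Y1 (col k) = csum n (fun i => Cmul (D k i) (mmul n Y1 D i k))).
  { intros k Hk. unfold quad, mmul, col. apply csum_ext; intros i Hi.
    rewrite <- (HD k i) by auto. rewrite <- csum_mul_l. reflexivity. }
  assert (Q2 : forall k, (k < n)%nat ->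
     quad n Y2 (col k) = csum n (fun j => Cmul (mmul n D Y2 k j) (D j k))).
  { intros k Hk. unfold quad, mmul, col. rewrite csum_swap. apply csum_ext; intros j Hj.
    rewrite <- csum_mul_r. apply csum_ext; intros i Hi.
    rewrite <- (HD k i) by auto. ring. }
  assert (S0 : csum n (fun k => Cadd (quad n Y1 (col k)) (quad n Y2 (col k))) = C0).
  { rewrite (csum_ext n _ (fun k => Cadd (csum n (fun i => Cmul (D k i) (mmul n Y1 D i k)))
                                      (csum n (fun j => Cmul (mmul n D Y2 k j) (D j k)))))
      by (intros k Hk; rewrite Q1, Q2 by auto; reflexivity).
    rewrite csum_add.
    rewrite (csum_swap n n (fun k j => Cmul (mmul n D Y2 k j) (D j k))).
    rewrite <- csum_add. apply csum_zero; intros k Hk.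
    rewrite <- csum_add. apply csum_zero; intros i Hi.
    transitivity (Cmul (D k i) (Cadd (mmul n Y1 D i k) (mmul n D Y2 i k))); [ring|].
    rewrite E0 by auto; ring. }
  assert (Z : forall k, (k < n)%nat ->
            Cre (quad n Y1 (col k)) = 0 /\ Cre (quad n Y2 (col k)) = 0).
  { intros k Hk.
    assert (0 <= Cre (quad n Y1 (col k))) by (apply P1).
    assert (0 <= Cre (quad n Y2 (col k))) by (apply P2).
    assert (Cre (Cadd (quad n Y1 (col k)) (quad n Y2 (col k))) = 0).
    { apply (csum_re_zero n (fun k => Cadd (quad n Y1 (col k)) (quad n Y2 (col k)))); auto.
      - intros; rewrite Cre_add. pose proof (proj2 P1 (col i)). pose proof (proj2 P2 (col i)). lra.
      - rewrite S0; reflexivity. }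
    rewrite Cre_add in H1. lra. }
  assert (Z1 : forall i k, (i < n)%nat -> (k < n)%nat -> mmul n Y1 D i k = C0).
  { intros i k Hi Hk. apply (psd_quad0 n Y1 (col k) P1 (proj1 (Z k Hk)) i Hi). }
  assert (Z2 : forall i k, (i < n)%nat -> (k < n)%nat -> mmul n Y2 D i k = C0).
  { intros i k Hi Hk. apply (psd_quad0 n Y2 (col k) P2 (proj2 (Z k Hk)) i Hi). }
  assert (DD : forall k, (k < n)%nat -> mmul n D D k k = C0).
  { intros k Hk. unfold D at 1. rewrite mmul_sub_l. fold D.
    rewrite Z1, Z2 by auto. unfold Csub, Copp, Cadd, C0; simpl; f_equal; ring. }
  intros i k Hi Hk.
  assert (Dz : D k i = C0).
  { apply Cnorm_zero.
    apply (csum_re_zero n (fun j => Cmul (Cconj (D j i)) (D j i))); auto.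
    - intros; apply Cnorm_nonneg.
    - rewrite (csum_ext n _ (fun j => Cmul (D i j) (D j i))).
      + change (Cre (mmul n D D i i) = 0). rewrite DD by auto. reflexivity.
      + intros j Hj. rewrite <- (HD i j) by auto. ring. }
  assert (Dz' : D i k = C0) by (rewrite (HD i k), Dz by auto; apply Cconj_C0).
  unfold D, Csub in Dz'.
  transitivity (Cadd (Cadd (Y1 i k) (Copp (Y2 i k))) (Y2 i k)); [ring|].
  rewrite Dz'; ring.
Qed.



Lemma psd_sqrt_exists n A : psd n A -> exists Y, psd n Y /\ meq n (mmul n Y Y) A.
Proof. intros H; apply Bt.bridge_sqrt; auto. intros v; apply quad_real, psd_herm; auto. Qed.

Lemma csum_mul2 n m f g :
  Cmul (csum n f) (csum m g) = csum n (fun i => csum m (fun j => Cmul (f i) (g j))).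
Proof.
  rewrite <- csum_mul_r. apply csum_ext; intros i Hi. rewrite csum_mul_l; reflexivity.
Qed.

Lemma madj_meq n X X' : meq n X X' -> meq n (madj X) (madj X').
Proof. intros H i j Hi Hj; unfold madj; rewrite H; auto. Qed.

Lemma gram_psd n X : psd n (mmul n (madj X) X).
Proof.
  split.
  - intros i j Hi Hj. unfold mmul, madj. rewrite csum_conj. apply csum_ext; intros k Hk.
    rewrite Cconj_mul, Cconj_invol; ring.
  - intros v. unfold quad, mmul, madj.
    set (w := fun k => csum n (fun j => Cmul (X k j) (v j))).
    replace (csum n (fun i => csum n (fun j => Cmul (Cconj (v i))
        (Cmul (csum n (fun k => Cmul (Cconj (X k i)) (X k j))) (v j)))))
      with (csum n (fun k => Cmul (Cconj (w k)) (w k))).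
    + apply csum_re_nonneg; intros; apply Cnorm_nonneg.
    + transitivity (csum n (fun k => csum n (fun i => csum n (fun j =>
          Cmul (Cconj (v i)) (Cmul (Cmul (Cconj (X k i)) (X k j)) (v j)))))).
      * apply csum_ext; intros k Hk. unfold w. rewrite csum_conj, csum_mul2.
        apply csum_ext; intros i Hi; apply csum_ext; intros j Hj.
        rewrite Cconj_mul; ring.
      * rewrite csum_swap. apply csum_ext; intros i Hi. rewrite csum_swap.
        apply csum_ext; intros j Hj. rewrite <- csum_mul_r, <- csum_mul_l.
        apply csum_ext; intros; ring.
Qed.

Lemma trace_norm_val n X Y : psd n Y -> meq n (mmul n Y Y) (mmul n (madj X) X) ->
  trace_norm n X = Cre (mtrace n Y).
Proof.
  intros HY HM. unfold trace_norm.
  destruct (epsilon_spec (inhabits 0) (fun t => exists Y, psd n Y /\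
     meq n (mmul n Y Y) (mmul n (madj X) X) /\ t = Cre (mtrace n Y)))
    as [Y' [HY' [HM' ->]]].
  { exists (Cre (mtrace n Y)), Y; auto. }
  assert (meq n Y' Y).
  { apply psd_sqrt_unique; auto. intros i j Hi Hj. rewrite HM', HM by auto. reflexivity. }
  unfold mtrace. f_equal. apply csum_ext; intros i Hi; auto.
Qed.

Lemma trace_norm_exists n X : exists Y, psd n Y /\ meq n (mmul n Y Y) (mmul n (madj X) X).
Proof. apply psd_sqrt_exists, gram_psd. Qed.

Lemma trace_norm_meq n X X' : meq n X X' -> trace_norm n X = trace_norm n X'.
Proof.
  intros H. destruct (trace_norm_exists n X) as [Y [HY HM]].
  rewrite (trace_norm_val n X Y), (trace_norm_val n X' Y); auto.
  intros i j Hi Hj. rewrite HM by auto. apply mmul_meq; auto. apply madj_meq; auto.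
Qed.

Lemma quad_pull N q Z g a : psd q Z -> (forall p, (p < N)%nat -> (g p < q)%nat) ->
  0 <= Cre (csum N (fun p => csum N (fun p' =>
           Cmul (Cconj (a p)) (Cmul (Z (g p) (g p')) (a p'))))).
Proof.
  intros HZ Hg.
  set (y := fun j => csum N (fun p => if Nat.eq_dec (g p) j then a p else C0)).
  replace (csum N (fun p => csum N (fun p' => Cmul (Cconj (a p)) (Cmul (Z (g p) (g p')) (a p')))))
    with (quad q Z y) by (
  unfold quad, y;
  transitivity (csum q (fun j => csum q (fun j' => csum N (fun p => csum N (fun p' =>
     Cmul (Cconj (if Nat.eq_dec (g p) j then a p else C0))
       (Cmul (Z j j') (if Nat.eq_dec (g p') j' then a p' else C0)))))));
  [ apply csum_ext; intros j Hj; apply csum_ext; intros j' Hj';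
    rewrite csum_conj, <- csum_mul_r; apply csum_ext; intros p Hp;
    rewrite <- !csum_mul_l; apply csum_ext; intros; ring
  | transitivity (csum q (fun j => csum N (fun p => csum q (fun j' => csum N (fun p' =>
     Cmul (Cconj (if Nat.eq_dec (g p) j then a p else C0))
       (Cmul (Z j j') (if Nat.eq_dec (g p') j' then a p' else C0)))))));
    [ apply csum_ext; intros; apply csum_swap |];
    transitivity (csum q (fun j => csum N (fun p => csum N (fun p' => csum q (fun j' =>
     Cmul (Cconj (if Nat.eq_dec (g p) j then a p else C0))
       (Cmul (Z j j') (if Nat.eq_dec (g p') j' then a p' else C0)))))));
    [ apply csum_ext; intros; apply csum_ext; intros; apply csum_swap |];
    rewrite csum_swap; apply csum_ext; intros p Hp;
    rewrite csum_swap; apply csum_ext; intros p' Hp';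
    rewrite (csum_single q (g p)); auto;
    [ rewrite (csum_single q (g p')); auto;
      [ destruct (Nat.eq_dec (g p) (g p)); [|congruence];
        destruct (Nat.eq_dec (g p') (g p')); [|congruence]; reflexivity
      | intros j' Hj' Hne; destruct (Nat.eq_dec (g p') j'); [congruence|];
        unfold C0, Cmul; simpl; f_equal; ring ]
    | intros j Hj Hne; apply csum_zero; intros j' Hj';
      destruct (Nat.eq_dec (g p) j); [congruence|];
      rewrite Cconj_C0; unfold C0, Cmul; simpl; f_equal; ring ] ]).
  apply HZ.
Qed.


Lemma divmod_comb c m i : (i < m)%nat -> ((c*m + i)/m = c /\ (c*m+i) mod m = i)%nat.
Proof.
  intros H. assert (m <> 0)%nat by lia. split.
  - rewrite Nat.div_add_l by auto. rewrite Nat.div_small by auto. lia.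
  - rewrite Nat.add_comm, Nat.Div0.mod_add. apply Nat.mod_small; auto.
Qed.
Lemma divmod_lt p k m : (p < k*m)%nat -> (p/m < k /\ p mod m < m)%nat.
Proof.
  intros H. assert (m <> 0)%nat by (intro; subst; lia). split.
  - apply Nat.Div0.div_lt_upper_bound. lia.
  - apply Nat.mod_upper_bound; auto.
Qed.

Lemma prod_psd N r q A B f g : psd r A -> psd q B ->
  (forall p, (p < N)%nat -> (f p < r)%nat /\ (g p < q)%nat) ->
  psd N (fun p p' => Cmul (A (f p) (f p')) (B (g p) (g p'))).
Proof.
  intros HA HB Hfg. split.
  - intros p p' Hp Hp'. destruct (Hfg p Hp), (Hfg p' Hp').
    rewrite Cconj_mul, <- (psd_herm r A HA), <- (psd_herm q B HB) by auto. reflexivity.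
  - intros u. destruct (psd_sqrt_exists r A HA) as [R [HR HRR]].
    assert (HA' : forall p p', (p < N)%nat -> (p' < N)%nat ->
       A (f p) (f p') = csum r (fun l => Cmul (Cconj (R l (f p))) (R l (f p')))).
    { intros p p' Hp Hp'. destruct (Hfg p Hp), (Hfg p' Hp').
      rewrite <- HRR by auto. unfold mmul. apply csum_ext; intros l Hl.
      rewrite (psd_herm r R HR (f p) l) by auto. reflexivity. }
    set (a := fun l p => Cmul (R l (f p)) (u p)).
    unfold quad.
    transitivity (Cre (csum r (fun l => csum N (fun p => csum N (fun p' =>
        Cmul (Cconj (a l p)) (Cmul (B (g p) (g p')) (a l p'))))))).
    + apply csum_re_nonneg; intros l Hl. apply (quad_pull N q B g (a l) HB).
      intros; apply Hfg; auto.
    + right. f_equal.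
      rewrite csum_swap. apply csum_ext; intros p Hp.
      rewrite csum_swap. apply csum_ext; intros p' Hp'.
      rewrite HA' by auto. rewrite <- csum_mul_r, <- csum_mul_r, <- csum_mul_l.
      apply csum_ext; intros l Hl. unfold a. rewrite Cconj_mul. ring.
Qed.

Definition kron (m : nat) (A B : Mat) : Mat :=
  fun p q => Cmul (A (p / m)%nat (q / m)%nat) (B (p mod m) (q mod m)).
Definition ptr (k n : nat) (X : Mat) : Mat :=
  fun c d => mtrace n (fun a b => X (c * n + a)%nat (d * n + b)%nat).

Lemma kron_psd k m A B : psd k A -> psd m B -> psd (k * m) (kron m A B).
Proof. intros; apply prod_psd with (r := k) (q := m); auto. intros; apply divmod_lt; auto. Qed.

Lemma kron_trace k m A B : mtrace (k * m) (kron m A B) = Cmul (mtrace k A) (mtrace m B).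
Proof.
  unfold mtrace, kron. rewrite csum_prod, csum_mul2. apply csum_ext; intros c Hc.
  apply csum_ext; intros i Hi. destruct (divmod_comb c m i Hi) as [-> ->]. reflexivity.
Qed.

Lemma kron_mul k m A B C' D p q :
  mmul (k * m) (kron m A B) (kron m C' D) p q = kron m (mmul k A C') (mmul m B D) p q.
Proof.
  unfold mmul, kron. rewrite csum_prod, csum_mul2. apply csum_ext; intros c Hc.
  apply csum_ext; intros i Hi. destruct (divmod_comb c m i Hi) as [-> ->]. ring.
Qed.

Lemma kron_meq k m A A' B B' : meq k A A' -> meq m B B' ->
  meq (k * m) (kron m A B) (kron m A' B').
Proof.
  intros H1 H2 p q Hp Hq. destruct (divmod_lt p k m Hp), (divmod_lt q k m Hq).
  unfold kron. rewrite H1, H2 by auto. reflexivity.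
Qed.

Lemma madj_kron m A B p q : madj (kron m A B) p q = kron m (madj A) (madj B) p q.
Proof. unfold madj, kron. apply Cconj_mul. Qed.

Lemma ptr_psd k n X : psd (k * n) X -> psd k (ptr k n X).
Proof.
  intros HX. split.
  - intros c d Hc Hd. unfold ptr, mtrace. rewrite csum_conj. apply csum_ext; intros a Ha.
    rewrite (psd_herm _ X HX) by nia. reflexivity.
  - intros u. unfold quad, ptr, mtrace.
    transitivity (Cre (csum n (fun a => csum k (fun c => csum k (fun d =>
       Cmul (Cconj (u c)) (Cmul (X (c * n + a)%nat (d * n + a)%nat) (u d))))))).
    + apply csum_re_nonneg; intros a Ha.
      apply (quad_pull k (k * n) X (fun c => (c * n + a)%nat) u HX). intros; nia.
    + right. f_equal. rewrite csum_swap. apply csum_ext; intros c Hc.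
      rewrite csum_swap. apply csum_ext; intros d Hd.
      rewrite <- csum_mul_r, <- csum_mul_l. reflexivity.
Qed.

Lemma ptr_trace k n X : mtrace k (ptr k n X) = mtrace (k * n) X.
Proof. unfold mtrace at 2. rewrite csum_prod. reflexivity. Qed.

Lemma proj_psd n v : psd n (proj v).
Proof.
  split.
  - intros i j Hi Hj. unfold proj. rewrite Cconj_mul, Cconj_invol. ring.
  - intros u. unfold quad, proj.
    set (t := csum n (fun j => Cmul (Cconj (v j)) (u j))).
    replace (csum n (fun i => csum n (fun j => Cmul (Cconj (u i)) (Cmul (Cmul (v i) (Cconj (v j))) (u j)))))
      with (Cmul (Cconj t) t).
    + apply Cnorm_nonneg.
    + unfold t. rewrite csum_conj, csum_mul2. apply csum_ext; intros i Hi.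
      apply csum_ext; intros j Hj. rewrite Cconj_mul, Cconj_invol. ring.
Qed.

Lemma csum_real n f : (forall i, (i < n)%nat -> Cim (f i) = 0) -> Cim (csum n f) = 0.
Proof.
  induction n; intros H; cbn [csum]. reflexivity.
  rewrite Cim_add, IHn, H by (auto; lia). lra.
Qed.

Lemma unit_trace n v : unit_vec n v -> mtrace n (proj v) = C1.
Proof.
  intros Hu. unfold unit_vec in Hu. unfold mtrace, proj.
  rewrite (csum_ext n _ (fun i => Cmul (Cconj (v i)) (v i))) by (intros; ring).
  apply Ceq.
  - exact Hu.
  - change (Cim (csum n (fun i => Cmul (Cconj (v i)) (v i))) = 0).
    apply csum_real; intros; apply Cnorm_im.
Qed.

Lemma red_state k n v : unit_vec (k * n) v ->
  psd k (ptr k n (proj v)) /\ mtrace k (ptr k n (proj v)) = C1.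
Proof.
  intros Hu. split.
  - apply ptr_psd, proj_psd.
  - rewrite ptr_trace. apply unit_trace; auto.
Qed.

Lemma trace_norm_kron k m rho W : psd k rho -> mtrace k rho = C1 ->
  trace_norm (k * m) (kron m rho W) = trace_norm m W.
Proof.
  intros Hr Ht. destruct (trace_norm_exists m W) as [Y [HY HYY]].
  rewrite (trace_norm_val m W Y HY HYY).
  rewrite (trace_norm_val (k * m) (kron m rho W) (kron m rho Y)).
  - rewrite kron_trace, Ht. unfold Cre, Cmul, C1; simpl. ring.
  - apply kron_psd; auto.
  - intros p q Hp Hq. rewrite kron_mul.
    transitivity (kron m (mmul k (madj rho) rho) (mmul m (madj W) W) p q).
    + refine (kron_meq k m _ _ _ _ _ _ p q Hp Hq); auto. apply mmul_meq; [|intros i j; auto].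
      intros i j Hi Hj. unfold madj. rewrite (psd_herm k rho Hr j i) by auto. symmetry; apply Cconj_invol.
    + rewrite <- kron_mul. unfold mmul. apply csum_ext; intros r Hr'.
      rewrite madj_kron. reflexivity.
Qed.


Lemma Rbar_le_refl x : Rbar_le x x.
Proof. destruct x; simpl; auto; lra. Qed.

Lemma Rbar_le_trans x y z : Rbar_le x y -> Rbar_le y z -> Rbar_le x z.
Proof. destruct x, y, z; simpl; auto; try lra; try tauto. Qed.

Lemma Rbar_le_antisym x y : Rbar_le x y -> Rbar_le y x -> x = y.
Proof. destruct x, y; simpl; intros; try tauto. f_equal; lra. Qed.

Lemma sup_exists S : exists s, is_sup S s.
Proof.
  destruct (classic (S PInf)) as [HP|HP].
  { exists PInf; split. - intros x _; destruct x; simpl; auto.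
    - intros u Hu; apply Hu; auto. }
  destruct (classic (exists r, S (Fin r))) as [[r0 Hr0]|HN].
  2:{ exists MInf; split.
      - intros x Hx; destruct x as [r| |]; simpl; [exfalso; eauto | exfalso; auto | auto].
      - intros; simpl; auto. }
  destruct (classic (exists M, forall r, S (Fin r) -> r <= M)) as [[M HM]|HU].
  - assert (HB : bound (fun r => S (Fin r))) by (exists M; intros r Hr; apply HM; auto).
    assert (HE : exists x, S (Fin x)) by (exists r0; auto).
    destruct (completeness (fun r => S (Fin r)) HB HE) as [l [Hl1 Hl2]].
    exists (Fin l); split.
    + intros x Hx; destruct x as [r| |]; simpl; [exact (Hl1 r Hx) | contradiction | auto].
    + intros u Hu; destruct u; simpl; auto.
      * apply Hl2. intros x Hx. apply (Hu (Fin x)); auto.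
      * apply (Hu (Fin r0)); auto.
  - exists PInf; split.
    + intros x _; destruct x; simpl; auto.
    + intros u Hu; destruct u; simpl; auto.
      * apply HU; exists r; intros x Hx; apply (Hu (Fin x)); auto.
      * apply (Hu (Fin r0)); auto.
Qed.

Lemma inf_exists S : exists s, is_inf S s.
Proof.
  destruct (classic (S MInf)) as [HP|HP].
  { exists MInf; split. - intros x _; destruct x; simpl; auto.
    - intros u Hu; apply Hu; auto. }
  destruct (classic (exists r, S (Fin r))) as [[r0 Hr0]|HN].
  2:{ exists PInf; split.
      - intros x Hx; destruct x; simpl; auto. exfalso; eauto.
      - intros u _; destruct u; simpl; auto. }
  destruct (classic (exists M, forall r, S (Fin r) -> M <= r)) as [[M HM]|HU].
  - assert (HB : bound (fun r => S (Fin (- r)))) by (exists (- M); intros r Hr; specialize (HM _ Hr); lra).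
    assert (HE : exists x, S (Fin (- x))) by (exists (- r0); rewrite Ropp_involutive; auto).
    destruct (completeness (fun r => S (Fin (- r))) HB HE) as [l [Hl1 Hl2]].
    exists (Fin (- l)); split.
    + intros x Hx; destruct x as [r| |]; simpl; [|auto|contradiction].
      assert (- r <= l) by (apply Hl1; rewrite Ropp_involutive; auto). lra.
    + intros u Hu; destruct u; simpl; auto.
      * assert (l <= - r); [|lra]. apply Hl2. intros x Hx.
        pose proof (Hu (Fin (- x)) Hx). simpl in H. lra.
      * apply (Hu (Fin r0)); auto.
  - exists MInf; split.
    + intros x _; destruct x; simpl; auto.
    + intros u Hu; destruct u; simpl; auto.
      * apply HU; exists r; intros x Hx; apply (Hu (Fin x)); auto.
      * apply (Hu (Fin r0)); auto.
Qed.

Lemma Rbar_sup_spec S : is_sup S (Rbar_sup S).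
Proof. unfold Rbar_sup. apply epsilon_spec. apply sup_exists. Qed.
Lemma Rbar_inf_spec S : is_inf S (Rbar_inf S).
Proof. unfold Rbar_inf. apply epsilon_spec. apply inf_exists. Qed.

Lemma is_sup_unique S a b : is_sup S a -> is_sup S b -> a = b.
Proof. intros [A1 A2] [B1 B2]. apply Rbar_le_antisym; auto. Qed.
Lemma is_inf_unique S a b : is_inf S a -> is_inf S b -> a = b.
Proof. intros [A1 A2] [B1 B2]. apply Rbar_le_antisym; auto. Qed.

Lemma sup_ub S x : S x -> Rbar_le x (Rbar_sup S).
Proof. intros; apply (proj1 (Rbar_sup_spec S)); auto. Qed.
Lemma sup_least S u : (forall x, S x -> Rbar_le x u) -> Rbar_le (Rbar_sup S) u.
Proof. intros; apply (proj2 (Rbar_sup_spec S)); auto. Qed.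

Lemma sup_singleton S t : S t -> (forall x, S x -> x = t) -> Rbar_sup S = t.
Proof.
  intros H1 H2. apply (is_sup_unique S); [apply Rbar_sup_spec|]. split.
  - intros x Hx; rewrite (H2 x Hx); apply Rbar_le_refl.
  - intros u Hu; apply Hu; auto.
Qed.

Lemma inf_eq S T : (forall a, S a -> exists b, T b /\ Rbar_le b a) ->
  (forall b, T b -> exists a, S a /\ Rbar_le a b) -> Rbar_inf S = Rbar_inf T.
Proof.
  intros H1 H2. apply (is_inf_unique S); [apply Rbar_inf_spec|].
  destruct (Rbar_inf_spec T) as [T1 T2]. split.
  - intros a Ha. destruct (H1 a Ha) as [b [Hb Hba]]. eapply Rbar_le_trans; eauto.
  - intros u Hu. apply T2. intros b Hb. destruct (H2 b Hb) as [a [Ha Hab]].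
    eapply Rbar_le_trans; eauto.
Qed.

Lemma ln_le0 x : Rbar_le (Rbar_ln x) (Fin 0) -> forall t, Rbar_le (Fin t) x -> t <= 1.
Proof.
  intros H t Ht. destruct x; simpl in *; try tauto.
  destruct (Rlt_dec 0 r); simpl in H.
  - assert (r <= 1).
    { destruct (Rle_lt_dec r 1); auto. exfalso. assert (Hl : ln 1 < ln r) by (apply ln_increasing; lra).
      rewrite ln_1 in Hl. lra. }
    lra.
  - lra.
Qed.

Lemma ln_fin_le0 t : t <= 1 -> Rbar_le (Rbar_ln (Fin t)) (Fin 0).
Proof.
  intros H; simpl. destruct (Rlt_dec 0 t); simpl; auto.
  destruct (Req_dec t 1). subst; rewrite ln_1; lra.
  assert (Hl : ln t < ln 1) by (apply ln_increasing; lra). rewrite ln_1 in Hl; lra.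
Qed.


Lemma divmod_id p b : ((p / b) * b + p mod b = p)%nat.
Proof. rewrite Nat.mul_comm, <- Nat.div_mod_eq. reflexivity. Qed.

Lemma mtrace_ptB N a b X : mtrace N (ptB a b X) = mtrace N X.
Proof. unfold mtrace, ptB. apply csum_ext; intros p Hp. rewrite divmod_id. reflexivity. Qed.

Lemma ptB_meq a b X Y : meq (a * b) X Y -> meq (a * b) (ptB a b X) (ptB a b Y).
Proof.
  intros H p q Hp Hq. unfold ptB. destruct (divmod_lt p a b Hp), (divmod_lt q a b Hq).
  apply H; nia.
Qed.

Definition e0 : Vec := fun i => if Nat.eq_dec i 0 then C1 else C0.

Lemma e0_unit N : (0 < N)%nat -> unit_vec N e0.
Proof.
  intros HN. unfold unit_vec. rewrite (csum_single N 0); auto.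
  - unfold e0; simpl. unfold Cre, Cmul, Cconj, C1; simpl; ring.
  - intros i Hi Hne. unfold e0. destruct (Nat.eq_dec i 0); [congruence|].
    unfold Cmul, Cconj, C0; simpl; f_equal; ring.
Qed.

Lemma idtensor1 n m F X : meq m (idtensor 1 n m F X) (F X).
Proof.
  intros p q Hp Hq. unfold idtensor.
  rewrite (Nat.div_small p m), (Nat.div_small q m), (Nat.mod_small p m), (Nat.mod_small q m)
    by auto. reflexivity.
Qed.

Section Main.
Variables dA' dB' dA dB : nat.
Let n := (dA' * dB')%nat.
Let m := (dA * dB)%nat.

Lemma EN_idtensor k w X :
  idtensor k n m (fun X => ptB dA dB (replacer n w (ptB dA' dB' X))) X =
  kron m (ptr k n X) (ptB dA dB w).
Proof.
  apply functional_extensionality; intro p; apply functional_extensionality; intro q.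
  unfold idtensor, kron, ptr, replacer, mscale, ptB at 1.
  rewrite mtrace_ptB. reflexivity.
Qed.

Lemma EN_replacer w : (0 < n)%nat ->
  EN_map dA' dB' dA dB (replacer n w) = EN_state dA dB w.
Proof.
  intros Hn. unfold EN_map, EN_state. f_equal. unfold diamond.
  apply sup_singleton.
  - exists 1%nat, 1%nat, e0. split; [lia|]. split; [lia|]. split.
    + apply e0_unit. simpl. lia.
    + f_equal. fold n m. rewrite EN_idtensor.
      destruct (red_state (1 * 1) n e0) as [H1 H2]. apply e0_unit; simpl; lia.
      symmetry; apply trace_norm_kron; auto.
  - intros x [sA [sB [v [HA [HB [Hv ->]]]]]]. f_equal. fold n m. rewrite EN_idtensor.
    destruct (red_state (sA * sB) n v Hv) as [H1 H2].
    apply trace_norm_kron; auto.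
Qed.

Lemma replacer_CP sigma : psd m sigma -> CP n m (replacer n sigma).
Proof.
  intros Hs. split; [split; [|split]|].
  - intros X Y H i j Hi Hj. unfold replacer, mscale. f_equal.
    unfold mtrace; apply csum_ext; intros; apply H; auto.
  - intros X Y i j Hi Hj. unfold replacer, mscale, madd, mtrace. rewrite csum_add. ring.
  - intros c X i j Hi Hj. unfold replacer, mscale, mtrace. rewrite csum_mul_l. ring.
  - intros k X HX. change (psd (k * m) (kron m (ptr k n X) sigma)).
    apply kron_psd; auto. apply ptr_psd; auto.
Qed.

Lemma app_channel rho : psd n rho -> mtrace n rho = C1 ->
  channel m (n * m) (fun X => kron m rho X).
Proof.
  intros Hr Ht. split; [split; [split; [|split]|]|].
  - intros X Y H. apply kron_meq; auto. intros i j _ _; reflexivity.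
  - intros X Y p q _ _. unfold kron, madd. ring.
  - intros c X p q _ _. unfold kron, mscale. ring.
  - intros k X HX.
    apply (prod_psd (k * (n * m)) n (k * m) rho X
      (fun p => ((p mod (n * m)) / m)%nat)
      (fun p => ((p / (n * m)) * m + (p mod (n * m)) mod m)%nat)); auto.
    intros p Hp. destruct (divmod_lt p k (n * m) Hp) as [H1 H2].
    destruct (divmod_lt (p mod (n * m)) n m H2) as [H3 H4]. split; auto. nia.
  - intros X. rewrite kron_trace, Ht. ring.
Qed.

Lemma sum_pull_psd S N q Z g : psd q Z ->
  (forall s p, (s < S)%nat -> (p < N)%nat -> (g s p < q)%nat) ->
  psd N (fun p p' => csum S (fun s => Z (g s p) (g s p'))).
Proof.
  intros HZ Hg. split.
  - intros p p' Hp Hp'. rewrite csum_conj. apply csum_ext; intros s Hs.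
    apply (psd_herm q Z HZ); auto.
  - intros u. unfold quad.
    transitivity (Cre (csum S (fun s => csum N (fun p => csum N (fun p' =>
       Cmul (Cconj (u p)) (Cmul (Z (g s p) (g s p')) (u p'))))))).
    + apply csum_re_nonneg; intros s Hs. apply (quad_pull N q Z (g s) u HZ). intros; auto.
    + right. f_equal. rewrite csum_swap. apply csum_ext; intros p Hp.
      rewrite csum_swap. apply csum_ext; intros p' Hp'.
      rewrite <- csum_mul_r, <- csum_mul_l. reflexivity.
Qed.

Definition Ptr (w : Mat) : Mat -> Mat := fun Y i j =>
  if andb (Nat.ltb i m) (Nat.ltb j m) then csum n (fun s => Y (s * m + i)%nat (s * m + j)%nat)
  else w i j.

Lemma Ptr_in w Y i j : (i < m)%nat -> (j < m)%nat ->
  Ptr w Y i j = csum n (fun s => Y (s * m + i)%nat (s * m + j)%nat).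
Proof.
  intros Hi Hj. unfold Ptr. rewrite (proj2 (Nat.ltb_lt i m) Hi), (proj2 (Nat.ltb_lt j m) Hj).
  reflexivity.
Qed.

Lemma Ptr_channel w : channel (n * m) m (Ptr w).
Proof.
  split; [split; [split; [|split]|]|].
  - intros X Y H i j Hi Hj. rewrite !Ptr_in by auto. apply csum_ext; intros s Hs.
    apply H; nia.
  - intros X Y i j Hi Hj. unfold madd. rewrite !Ptr_in by auto. apply csum_add.
  - intros c X i j Hi Hj. unfold mscale. rewrite !Ptr_in by auto. apply csum_mul_l.
  - intros k X HX.
    apply psd_meq with (X := fun p q => csum n (fun s =>
        X ((p / m) * (n * m) + (s * m + p mod m))%nat ((q / m) * (n * m) + (s * m + q mod m))%nat)).
    + apply (sum_pull_psd n (k * m) (k * (n * m)) X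
         (fun s p => ((p / m) * (n * m) + (s * m + p mod m))%nat)); auto.
      intros s p Hs Hp. destruct (divmod_lt p k m Hp). nia.
    + intros p q Hp Hq. unfold idtensor.
      destruct (divmod_lt p k m Hp), (divmod_lt q k m Hq).
      rewrite Ptr_in by auto. reflexivity.
  - intros X. unfold mtrace at 2. rewrite csum_prod, csum_swap. unfold mtrace.
    apply csum_ext; intros i Hi. rewrite Ptr_in by auto. reflexivity.
Qed.



Lemma ptB_proj_e0 : meq n (ptB dA' dB' (proj e0)) (proj e0).
Proof.
  intros p q Hp Hq. unfold ptB, proj, e0.
  destruct (Nat.eq_dec p 0), (Nat.eq_dec q 0); subst.
  - simpl. rewrite Nat.Div0.div_0_l, Nat.Div0.mod_0_l. simpl. reflexivity.
  - destruct (Nat.eq_dec ((0 / dB') * dB' + q mod dB') 0) as [E1|E1];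
    destruct (Nat.eq_dec ((q / dB') * dB' + 0 mod dB') 0) as [E2|E2];
    try (unfold Cmul, Cconj, C0, C1; simpl; f_equal; ring).
    exfalso. pose proof (divmod_id q dB'). rewrite Nat.Div0.mod_0_l in E2. lia.
  - destruct (Nat.eq_dec ((p / dB') * dB' + 0 mod dB') 0) as [E1|E1];
    destruct (Nat.eq_dec ((0 / dB') * dB' + p mod dB') 0) as [E2|E2];
    try (unfold Cmul, Cconj, C0, C1; simpl; f_equal; ring).
    exfalso. pose proof (divmod_id p dB'). rewrite Nat.Div0.mod_0_l in E1.
    rewrite Nat.Div0.div_0_l in E2. lia.
  - destruct (Nat.eq_dec ((p / dB') * dB' + q mod dB') 0) as [E1|E1];
    destruct (Nat.eq_dec ((q / dB') * dB' + p mod dB') 0) as [E2|E2];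
    try (unfold Cmul, Cconj, C0, C1; simpl; f_equal; ring).
    exfalso. pose proof (divmod_id p dB'). lia.
Qed.

Lemma rains_eq D w : gen_div D -> (0 < n)%nat -> state m w ->
  rains_map D dA' dB' dA dB (replacer n w) = rains_state D dA dB w.
Proof.
  intros Hd Hn [Hwp Hwt].
  assert (Hm : (0 < m)%nat).
  { destruct m eqn:E; [|lia]. exfalso. unfold mtrace in Hwt. simpl in Hwt.
    unfold C0, C1 in Hwt. injection Hwt; lra. }
  unfold rains_map, rains_state. fold n m.
  apply inf_eq.
  - intros a [M [[[L1 [L2 L3]] Hcp] [HE ->]]].
    assert (Hv0 : unit_vec (n * n) e0) by (apply e0_unit; nia).
    destruct (red_state n n e0 Hv0) as [Hr0 Hr0t].
    set (rho0 := ptr n n (proj e0)) in *.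
    set (rho := idtensor n n m (replacer n w) (proj e0)).
    set (sigma := idtensor n n m M (proj e0)).
    assert (Hrho : rho = kron m rho0 w) by reflexivity.
    assert (Hsig : psd (n * m) sigma) by (apply Hcp; apply proj_psd).
    assert (Hrs : state (n * m) rho).
    { rewrite Hrho; split. apply kron_psd; auto. rewrite kron_trace, Hr0t, Hwt. ring. }
    assert (HPw : Ptr w rho = w).
    { apply functional_extensionality; intro i; apply functional_extensionality; intro j.
      unfold Ptr. destruct (Nat.ltb_spec i m), (Nat.ltb_spec j m); simpl; auto.
      rewrite Hrho. unfold kron.
      rewrite (csum_ext n _ (fun s => Cmul (rho0 s s) (w i j))).
      - rewrite csum_mul_r. change (csum n (fun s => rho0 s s)) with (mtrace n rho0).
        rewrite Hr0t. ring.
      - intros s Hs. destruct (divmod_comb s m i), (divmod_comb s m j); auto.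
        rewrite H1, H2, H3, H4. reflexivity. }
    assert (Hmeq : meq m (Ptr w sigma) (M (proj e0))).
    { intros i j Hi Hj. rewrite Ptr_in by auto.
      rewrite (csum_single n 0); auto.
      - unfold sigma, idtensor. destruct (divmod_comb 0 m i), (divmod_comb 0 m j); auto.
        rewrite H, H0, H1, H2. reflexivity.
      - intros s Hs Hne. unfold sigma, idtensor.
        destruct (divmod_comb s m i), (divmod_comb s m j); auto.
        rewrite H, H0, H1, H2.
        set (B := fun a b => proj e0 (s * n + a)%nat (s * n + b)%nat).
        assert (HB : meq n B (mscale C0 B)).
        { intros a b Ha Hb. unfold B, mscale, proj, e0.
          destruct (Nat.eq_dec (s * n + a) 0); [nia|].
          unfold Cmul, C0; simpl; f_equal; ring. }
        rewrite (L1 B (mscale C0 B) HB i j Hi Hj), (L3 C0 B i j Hi Hj).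
        unfold mscale, Cmul, C0; simpl; f_equal; ring. }
    exists (D m w (Ptr w sigma)). split.
    + exists (Ptr w sigma). split; [|split; [|reflexivity]].
      * pose proof (proj2 (proj1 (Ptr_channel w)) 1%nat sigma) as H.
        rewrite !Nat.mul_1_l in H.
        apply psd_meq with (X := idtensor 1 (n * m) m (Ptr w) sigma); auto.
        apply idtensor1.
      * unfold EN_state. apply ln_fin_le0.
        set (P := fun X => ptB dA dB (M (ptB dA' dB' X))).
        assert (Ht : trace_norm m (ptB dA dB (Ptr w sigma)) =
                     trace_norm ((1 * 1) * m) (idtensor (1 * 1) n m P (proj e0))).
        { replace ((1 * 1) * m)%nat with m by lia.
          change (1 * 1)%nat with 1%nat.
          rewrite (trace_norm_meq m (idtensor 1 n m P (proj e0)) (P (proj e0)))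
            by apply idtensor1.
          apply trace_norm_meq. unfold P, m. apply ptB_meq. fold m.
          intros i j Hi Hj. rewrite Hmeq by auto.
          apply L1; auto. intros a b Ha Hb. symmetry; apply ptB_proj_e0; auto. }
        fold m. rewrite Ht. unfold EN_map, diamond in HE. fold n m in HE. fold P in HE.
        apply (ln_le0 _ HE). apply sup_ub.
        exists 1%nat, 1%nat, e0. split; [lia|]. split; [lia|]. split; [|reflexivity].
        apply e0_unit; simpl; lia.
    + apply Rbar_le_trans with (D (n * m)%nat rho sigma).
      * rewrite <- HPw at 1. apply Hd; auto. apply Ptr_channel.
      * apply sup_ub. exists e0. split; auto.
  - intros b [sg [Hsg [HEs ->]]].
    exists (chan_div D n m (replacer n w) (replacer n sg)). split.
    + exists (replacer n sg). split; [apply replacer_CP; auto|split; [|reflexivity]].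
      rewrite EN_replacer; auto.
    + apply sup_least. intros x [v [Hv ->]].
      destruct (red_state n n v Hv) as [Hr Hrt].
      change (Rbar_le (D (n * m)%nat (kron m (ptr n n (proj v)) w) (kron m (ptr n n (proj v)) sg))
                      (D m w sg)).
      apply (Hd m (n * m)%nat (fun X => kron m (ptr n n (proj v)) X) w sg); auto.
      * apply app_channel; auto.
      * split; auto.
Qed.

End Main.

Theorem mainTheorem7 (D : Div) (dA' dB' dA dB : nat) (w : Mat) :
  gen_div D ->
  (0 < dA')%nat -> (0 < dB')%nat ->
  state (dA * dB)%nat w ->
  EN_map dA' dB' dA dB (replacer (dA' * dB')%nat w) = EN_state dA dB w /\
  rains_map D dA' dB' dA dB (replacer (dA' * dB')%nat w) = rains_state D dA dB w.
Proof.
  intros Hd H1 H2 Hw. split.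
  - apply EN_replacer. nia.
  - apply rains_eq; auto. nia.
Qed.
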